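(* Let $p$ be a prime and $n\ge 1$. Let $f_0,f_1,\ldots,f_{p-1}$ be near-bent functions from $\mathbb{F}_{p^n}$ to $\mathbb{F}_p$ such that $\mathrm{supp}(\widehat{f_i})\cap \mathrm{supp}(\widehat{f_j})=\emptyset$ for all $0\le i\ne j\le p-1$. Then the function $F:\mathbb{F}_{p^n}\times\mathbb{F}_p\to\mathbb{F}_p$ defined by \[ F(x,y)=(p-1)\sum_{k=0}^{p-1}\Big(\prod_{j\in\mathbb{F}_p,\, j\ne k}(y-j)\Big)f_k(x) \] is bent (as a function on the $(n+1)$-dimensional $\mathbb{F}_p$-space $\mathbb{F}_{p^n}\times\mathbb{F}_p$, with inner product $\langle (a,b),(x,y)\rangle=\mathrm{Tr}_n(ax)+by$).
   Context: $\epsilon_p=e^{2\pi i/p}$ and $\mathrm{Tr}_n$ is the absolute trace from $\mathbb{F}_{p^n}$ to $\mathbb{F}_p$. For $f:\mathbb{F}_{p^n}\to\mathbb{F}_p$ the Fourier transform is $\widehat{f}(b)=\sum_{x\in\mathbb{F}_{p^n}}\epsilon_p^{f(x)-\mathrm{Tr}_n(bx)}$; more generally for a function $g$ on an $m$-dimensional $\mathbb{F}_p$-space $V$ with inner product $\langle\cdot,\cdot\rangle$, $\widehat{g}(b)=\sum_{x\in V}\epsilon_p^{g(x)-\langle b,x\rangle}$. $g$ is bent if $|\widehat{g}(b)|^2=p^m$ for all $b$. A function $f:\mathbb{F}_{p^n}\to\mathbb{F}_p$ is near-bent if $|\widehat{f}(b)|^2\in\{0,p^{n+1}\}$ for all $b\in\mathbb{F}_{p^n}$.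 $\mathrm{supp}(\widehat f)=\{b\in\mathbb{F}_{p^n}:\widehat f(b)\neq 0\}$. *)

(* Defs.v *)
From HB Require Import structures.
From mathcomp Require Import all_boot all_order all_algebra all_field.
Unset Printing Implicit Defensive.
Import Order.TTheory GRing.Theory Num.Theory.
Local Open Scope ring_scope.

(* epsilon_p = e^{2 pi i / p}: p.-root (-1) is e^{i pi / p} (minimal argument). *)
Definition eps (p : nat) : algC := (p.-root (-1)) ^+ 2.

Definition traceK {K : finFieldType} (p n : nat) (x : K) : K :=
  \sum_(i < n) x ^+ (p ^ i)%N.

Definition Tr {K : finFieldType} (p n : nat) (x : K) : 'F_p :=
  odflt 0 [pick k : 'F_p | ((val k)%:R : K) == traceK p n x].

Definition epow {p : nat} (z : 'F_p) : algC := eps p ^+ (val z).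

Definition fourier {K : finFieldType} (p n : nat) (f : K -> 'F_p) (b : K) : algC :=
  \sum_(x : K) epow (f x - Tr p n (b * x)).

Definition fourier2 {K : finFieldType} (p n : nat) (g : K -> 'F_p -> 'F_p)
    (a : K) (b : 'F_p) : algC :=
  \sum_(x : K) \sum_(y : 'F_p) epow (g x y - (Tr p n (a * x) + b * y)).

Definition near_bent {K : finFieldType} (p n : nat) (f : K -> 'F_p) : Prop :=
  forall b : K, `|fourier p n f b| ^+ 2 = 0 \/
                `|fourier p n f b| ^+ 2 = (p ^ n.+1)%:R.

Definition bent2 {K : finFieldType} (p n : nat) (g : K -> 'F_p -> 'F_p) : Prop :=
  forall (a : K) (b : 'F_p), `|fourier2 p n g a b| ^+ 2 = (p ^ n.+1)%:R.

Definition supp_fourier {K : finFieldType} (p n : nat) (f : K -> 'F_p) : {set K} :=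
  [set b | fourier p n f b != 0].

Definition Fglue {K : finFieldType} {p : nat} (f : 'F_p -> K -> 'F_p)
    (x : K) (y : 'F_p) : 'F_p :=
  (p.-1)%:R * \sum_(k : 'F_p) (\prod_(j : 'F_p | j != k) (y - j)) * f k x.

(* Main.v *)
Require Import Defs.
From HB Require Import structures.
From mathcomp Require Import all_boot all_order all_algebra all_field.
Import Order.TTheory GRing.Theory Num.Theory.
Local Open Scope ring_scope.
Set Implicit Arguments. Unset Strict Implicit.
Lemma eps_expp p : (0 < p)%N -> eps p ^+ p = 1.
Proof.
move=> p0; rewrite /eps -exprM mulnC exprM rootCK //.
by rewrite sqrrN expr1n.
Qed.

Lemma eps_neq1 p : prime p -> eps p != 1.
Proof.
move=> pp; have p0 := prime_gt0 pp; have p1 := prime_gt1 pp.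
set r := (p.-root (-1 : algC)).
have rp : r ^+ p = -1 by rewrite rootCK.
apply/negP; rewrite /eps -/r sqrf_eq1 => /orP[] /eqP r1.
  by move: rp; rewrite r1 expr1n => /eqP; rewrite -subr_eq0 opprK (@pnatr_eq0 _ 2).
have [z zprim] : {z : algC | (2 * p)%N.-primitive_root z}.
  by apply: C_prim_root_exists; rewrite muln_gt0 p0.
have z2p : z ^+ (2 * p) = 1 := prim_expr_order zprim.
have zp : z ^+ p = -1.
  have : (z ^+ p) ^+ 2 == 1 by rewrite -exprM mulnC z2p.
  rewrite sqrf_eq1 -(prim_order_dvd zprim) => /orP[|/eqP //].
  by rewrite gtnNdvd // -{1}(mul1n p) ltn_pmul2r.
have z2 : z ^+ 2 != 1.
  by rewrite -(prim_order_dvd zprim) gtnNdvd // -[X in (X < _)%N]muln1 ltn_pmul2l.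
pose y := if 0 <= 'Im z then z else z^*.
have yp : y ^+ p = -1 by rewrite /y; case: ifP => // _; rewrite -rmorphXn zp rmorphN1.
have y2 : y ^+ 2 != 1.
  rewrite /y; case: ifP => // _; rewrite -rmorphXn.
  by apply: contra z2 => /eqP h; rewrite -(conjCK (z ^+ 2)) h rmorph1.
have yIm : 0 <= 'Im y.
  rewrite /y; case: ifP => // /negbT; rewrite Im_conj oppr_ge0 => h.
  by rewrite le_eqVlt; move: h; rewrite -real_ltNge ?rpred0 ?Creal_Im // => ->; rewrite orbT.
have yRe : 'Re y <= -1.
  have := rootC_Re_max p0 yp yIm; rewrite -/r r1 raddfN /= (Creal_ReP _ (rpred1 _)) //.
have ny : `|y| = 1.
  apply/eqP; rewrite -(@pexpr_eq1 _ _ p) // -normrX yp normrN normr1 //.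
have := normC2_Re_Im y; rewrite ny expr1n => h.
have Re2 : 1 <= 'Re y ^+ 2.
  rewrite -sqrrN exprn_ege1 // lerNr //.
have Im2 : 'Im y ^+ 2 = 0.
  apply/eqP; rewrite eq_le -realEsqr Creal_Im andbT.
  by rewrite -(lerD2l ('Re y ^+ 2)) addr0 -h.
move/eqP: Im2; rewrite expf_eq0 /= => /eqP Im0.
move: y2; rewrite [y]Crect Im0 mulr0 addr0.
have -> : 'Re y ^+ 2 = 1 by rewrite h Im0 expr0n addr0.
by rewrite eqxx.
Qed.
Section Fp.
Variable p : nat.
Hypothesis pp : prime p.

Lemma Fp_lt (k : 'F_p) : (val k < p)%N.
Proof. suff: forall m, (m < (Zp_trunc (pdiv p)).+2)%N -> (m < p)%N by apply; exact: ltn_ord. by rewrite Fp_cast. Qed.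

Lemma Fp_valD (a b : 'F_p) : val (a + b) = ((val a + val b) %% p)%N.
Proof. by rewrite /=; congr (_ %% _)%N; apply: Fp_cast. Qed.

Lemma epowD (a b : 'F_p) : epow (a + b) = epow a * epow b.
Proof.
by rewrite /epow Fp_valD expr_mod ?exprD // eps_expp // prime_gt0.
Qed.

Lemma epow0 : epow (0 : 'F_p) = 1.
Proof. by rewrite /epow /= expr0. Qed.

Lemma epowN (a : 'F_p) : epow (- a) * epow a = 1.
Proof. by rewrite -epowD addNr epow0. Qed.

Lemma epow_neq1 (t : 'F_p) : t != 0 -> epow t != 1.
Proof.
move=> t0; rewrite /epow.
have [m mprim mdvd] := prim_order_exists (prime_gt0 pp) (eps_expp (prime_gt0 pp)).
have /primeP [_ hd] := pp; case/orP: (hd _ mdvd) => /eqP mE.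
  by move: (prim_expr_order mprim); rewrite mE expr1 => /eqP; rewrite (negPf (eps_neq1 pp)).
rewrite -(prim_order_dvd mprim) mE gtnNdvd ?Fp_lt //.
by rewrite lt0n; apply: contra t0 => /eqP h; apply/eqP/val_inj.
Qed.

Lemma norm_eps : `|eps p| = 1.
Proof.
apply/eqP; rewrite -(@pexpr_eq1 _ _ p) ?prime_gt0 // -normrX eps_expp ?prime_gt0 //.
by rewrite normr1.
Qed.

Lemma norm_epow (a : 'F_p) : `|epow a| = 1.
Proof. by rewrite /epow normrX norm_eps expr1n. Qed.

Lemma conj_epow (a : 'F_p) : (epow a)^* = epow (- a).
Proof.
rewrite -[LHS]mulr1 -(epowN a) [epow (- a) * _]mulrC mulrA.
by rewrite -normCKC norm_epow expr1n mul1r.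
Qed.
End Fp.
Section Kfacts.
Variables (p n : nat) (K : finFieldType).
Hypotheses (pp : prime p) (hn : (1 <= n)%N) (hK : #|K| = (p ^ n)%N).

Let chK : p \in [pchar K] := card_finPcharP hK pp.

Definition phi (k : 'F_p) : K := (val k)%:R.

Lemma phiD a b : phi (a + b) = phi a + phi b.
Proof. by rewrite /phi Fp_valD // GRing.natr_mod_pchar // natrD. Qed.

Lemma phi_inj : injective phi.
Proof.
have key : forall a b : 'F_p, (val a <= val b)%N -> phi a = phi b -> a = b.
  move=> a b ab e.
  have : ((val b - val a)%N%:R == 0 :> K) by rewrite natrB // subr_eq0; apply/eqP; exact: (esym e).
  rewrite -(dvdn_pcharf chK) => hd.
  apply/val_inj/eqP; rewrite eqn_leq ab /=.
  move: hd; rewrite -subn_eq0; case: (val b - val a)%N (leq_subr (val a) (val b)) => //= m.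
  move=> mb /dvdn_leq -/(_ isT) pm; have := Fp_lt pp b.
  by move=> bp; have := leq_ltn_trans (leq_trans pm mb) bp; rewrite ltnn.
move=> a b; case: (leqP (val a) (val b)) => h; first exact: key.
by move=> e; apply/esym/key => //; exact: ltnW.
Qed.

Lemma frob_id (x : K) : x ^+ (p ^ n) = x.
Proof. by rewrite -hK expf_card. Qed.

Lemma traceK_p (x : K) : traceK p n x ^+ p = traceK p n x.
Proof.
rewrite /traceK.
have -> : (\sum_(i < n) x ^+ (p ^ i)) ^+ p = pFrobenius_aut chK (\sum_(i < n) x ^+ (p ^ i)) by [].
rewrite rmorph_sum /=.
under eq_bigr => i _ do rewrite pFrobenius_autE -exprM -expnSr.
move: (frob_id x); case: n hn => // m _ fx.
rewrite big_ord_recr /= [RHS]big_ord_recl /= expn0 expr1 fx addrC.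
by congr (_ + _); apply: eq_bigr => i _; rewrite /bump add1n.
Qed.

Lemma traceKD (x y : K) : traceK p n (x + y) = traceK p n x + traceK p n y.
Proof.
rewrite /traceK -big_split /=; apply: eq_bigr => i _.
by rewrite exprDn_pchar // pnatX (pnatE _ pp) chK.
Qed.

Lemma phi_fix (k : 'F_p) : phi k ^+ p = phi k.
Proof. by have := pFrobenius_aut_nat chK (val k). Qed.

Lemma fixed_in_image (z : K) : z ^+ p = z -> exists k, phi k = z.
Proof.
move=> zp; case: (pickP (fun k => phi k == z)) => [k /eqP hk | hz]; first by exists k.
exfalso.
pose r : {poly K} := 'X^p - 'X.
have sr : size r = p.+1.
  rewrite /r size_addl ?size_polyXn // size_opp size_polyX ltnS prime_gt1 //.
have r0 : r != 0 by rewrite -size_poly_eq0 sr.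
have := max_poly_roots (rs := z :: map phi (enum 'F_p)) r0.
rewrite /= size_map -cardE card_Fp // sr ltnn => H; suff: false by []; apply: H.
  rewrite /root /r !hornerE zp subrr eqxx /=.
  by apply/allP => w /mapP [k _ ->]; rewrite /root !hornerE phi_fix subrr.
rewrite map_inj_uniq ?enum_uniq ?andbT; last exact: phi_inj.
by apply/mapP => -[k _ e]; have := hz k; rewrite -e eqxx.
Qed.

Lemma Tr_spec (x : K) : phi (Tr p n x) = traceK p n x.
Proof.
rewrite /Tr; case: pickP => [k /eqP //| h].
have [k hk] := fixed_in_image (traceK_p x).
by move: (h k); rewrite -hk /phi eqxx.
Qed.

Lemma TrD (x y : K) : Tr p n (x + y) = Tr p n x + Tr p n y.
Proof. by apply: phi_inj; rewrite phiD !Tr_spec traceKD. Qed.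

Lemma Tr0 : Tr p n (0 : K) = 0.
Proof.
apply: phi_inj; rewrite Tr_spec /traceK big1 // => i _.
rewrite expr0n; case: eqP => // /eqP; rewrite expn_eq0 => /andP[/eqP p0 _].
by move: (prime_gt0 pp); rewrite p0.
Qed.

Lemma traceK_nonzero : exists x : K, traceK p n x != 0.
Proof.
case: (pickP (fun x : K => traceK p n x != 0)) => [x hx | h]; first by exists x.
exfalso.
pose q : {poly K} := \sum_(i < n) 'X^(p ^ i).
have p1 := prime_gt1 pp.
have qx x : q.[x] = traceK p n x.
  by rewrite /q horner_sum; apply: eq_bigr => i _; rewrite hornerXn.
have m_lt : (n.-1 < n)%N by case: (n) hn.
have q0 : q != 0.
  apply/eqP => /(congr1 (fun r : {poly K} => r`_(p ^ n.-1)%N)).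
  rewrite coef0 /q coef_sum (bigD1 (Ordinal m_lt)) //= coefXn eqxx big1 ?addr0.
    by move/eqP; rewrite oner_eq0.
  move=> i /eqP ine; rewrite coefXn eqn_exp2l //.
  by case: eqP => // e; case: ine; apply: val_inj; rewrite /= e.
have := max_poly_roots (rs := enum K) q0.
rewrite enum_uniq -cardE hK.
have -> : all (root q) (enum K) by apply/allP => x _; rewrite /root qx; apply/eqP; have := h x; move/negbFE/eqP.
move=> /(_ isT isT) lt.
have sq : (size q <= (p ^ n.-1).+1)%N.
  apply: leq_trans (size_sum _ _ _) _; apply/bigmax_leqP => i _.
  rewrite size_polyXn ltnS leq_pexp2l ?prime_gt0 //; have := ltn_ord i; move: (nat_of_ord i) => j; case: (n) hn => //.
have := leq_trans lt sq; rewrite ltnS.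
rewrite -{1}(prednK hn) expnS => le.
have pos : (0 < p ^ n.-1)%N by rewrite expn_gt0 prime_gt0.
by have := leq_trans (ltn_Pmull p1 pos) le; rewrite ltnn.
Qed.
End Kfacts.
Section Fourier.
Variables (p n : nat) (K : finFieldType).
Hypotheses (pp : prime p) (hn : (1 <= n)%N) (hK : #|K| = (p ^ n)%N).

Lemma TrN (x : K) : Tr p n (- x) = - Tr p n x.
Proof.
apply/eqP; rewrite -subr_eq0 opprK -TrD // addNr Tr0 //.
Qed.

Lemma epowB (u v : 'F_p) : epow (u - v) = epow u * epow (- v).
Proof. exact: epowD. Qed.

Lemma char_sum (c : K) :
  \sum_(a : K) epow (Tr p n (a * c)) = if c == 0 then (#|K|)%:R else 0.
Proof.
case: eqP => [-> | /eqP c0].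
  under eq_bigr => a _ do rewrite mulr0 Tr0 // epow0.
  by rewrite sumr_const cardE.
have [x0 hx0] := traceK_nonzero pp hn hK.
set t := Tr p n x0.
have t0 : t != 0.
  apply/eqP => t0; move: hx0; rewrite -(Tr_spec pp hn hK) -/t t0 /phi /= eqxx //.
set S := \sum_(a : K) epow (Tr p n (a * c)).
have hS : S = S * epow t.
  rewrite {1}/S (reindex_inj (addIr (x0 / c))) /S /= mulr_suml; apply: eq_bigr => a _.
  by rewrite mulrDl divfK // TrD // epowD.
have : S * (1 - epow t) = 0 by rewrite mulrBr mulr1 -hS subrr.
move/eqP; rewrite mulf_eq0 subr_eq0 [1 == _]eq_sym (negPf (epow_neq1 pp t0)) orbF.
by move/eqP.
Qed.

Lemma conj_fourier (g : K -> 'F_p) a :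
  (fourier p n g a)^* = \sum_(x : K) epow (- (g x - Tr p n (a * x))).
Proof. by rewrite /fourier rmorph_sum; apply: eq_bigr => x _; apply: conj_epow. Qed.

Lemma term_split (g : K -> 'F_p) a x y :
  epow (g x - Tr p n (a * x)) * epow (- (g y - Tr p n (a * y))) =
  epow (g x - g y) * epow (Tr p n (a * (y - x))).
Proof.
rewrite opprB mulrBr TrD // TrN // !epowD.
rewrite -!mulrA; congr (_ * _).
rewrite mulrCA [RHS]mulrCA; congr (_ * _); last apply: mulrC.
all: by [].
Qed.

Lemma parseval (g : K -> 'F_p) :
  \sum_(a : K) `|fourier p n g a| ^+ 2 = (#|K| * #|K|)%:R.
Proof.
under eq_bigr => a _ do rewrite normCK conj_fourier {1}/fourier mulr_suml.
under eq_bigr => a _ do under eq_bigr => x _ do rewrite mulr_sumr.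
under eq_bigr => a _ do under eq_bigr => x _ do under eq_bigr => y _ do rewrite term_split.
rewrite exchange_big /=.
under eq_bigr => x _ do rewrite exchange_big /=.
under eq_bigr => x _ do under eq_bigr => y _ do rewrite -mulr_sumr char_sum subr_eq0.
have e : forall x : K, \sum_(y : K) epow (g x - g y) * (if y == x then (#|K|)%:R else 0) = (#|K|)%:R.
  by move=> x; rewrite (bigD1 x) //= eqxx subrr epow0 mul1r big1 ?addr0 // => y /negPf ->; rewrite mulr0.
under eq_bigr => x _ do rewrite e.
by rewrite sumr_const natrM mulr_natr.
Qed.
End Fourier.
Lemma nat_prod_fact m : (\prod_(j < m.+1 | (j : nat) != 0%N) (j : nat))%N = m`!.
Proof.
rewrite big_mkcond big_ord_recl /= mul1n fact_prod big_add1 /= big_mkord.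
by apply: eq_bigr => i _.
Qed.

Section FpWilson.
Variable p : nat.
Hypothesis pp : prime p.

Lemma prod_nz_Fp : \prod_(j : 'F_p | j != 0) j = -1.
Proof.
have e1 : \prod_(j : 'F_p | j != 0) j = \prod_(j : 'F_p | j != 0) (nat_of_ord j)%:R.
  by apply: eq_bigr => j _; rewrite natr_Zp.
rewrite e1 -natr_prod.
have e2 : (\prod_(j : 'F_p | j != (0 : 'F_p)%R) (nat_of_ord j))%N = ((Zp_trunc (pdiv p)).+1)`!.
  rewrite -nat_prod_fact; apply: eq_bigl => j //.
rewrite e2.
have hm : (Zp_trunc (pdiv p)).+1 = p.-1 by have := congr1 predn (Fp_cast pp).
rewrite hm; have := Wilson (prime_gt1 pp); rewrite pp => /esym.
rewrite (dvdn_pcharf (pchar_Fp pp)) -natr1 addr_eq0 => /eqP //.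
Qed.

Lemma prod_nz_Fp_y (y : 'F_p) : \prod_(j : 'F_p | j != y) (y - j) = -1.
Proof.
have inj : injective (fun j : 'F_p => y - j) by move=> u v /addrI /oppr_inj.
rewrite (reindex_inj inj) /= -prod_nz_Fp; apply: eq_big => j.
  by rewrite -{2}[y]subr0 (inj_eq inj).
by rewrite opprB addrCA subrr addr0.
Qed.

Lemma pm1_Fp : (p.-1)%:R = - 1 :> 'F_p.
Proof. by apply/eqP; rewrite -addr_eq0 natr1 prednK ?prime_gt0 // pchar_Fp_0. Qed.
End FpWilson.

Lemma Fglue_eval (p : nat) (K : finFieldType) (pp : prime p) (f : 'F_p -> K -> 'F_p) x y :
  Fglue f x y = f y x.
Proof.
rewrite /Fglue (bigD1 y) //= prod_nz_Fp_y // big1 ?addr0.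
  by rewrite pm1_Fp // mulN1r mulNr opprK mul1r.
move=> k ky; rewrite (bigD1 y) /=; last by rewrite eq_sym.
by rewrite subrr !mul0r.
Qed.
Lemma fourier2_split (p n : nat) (K : finFieldType) (pp : prime p)
  (f : 'F_p -> K -> 'F_p) a b :
  fourier2 p n (Fglue f) a b = \sum_(y : 'F_p) epow (- (b * y)) * fourier p n (f y) a.
Proof.
rewrite /fourier2 exchange_big /=; apply: eq_bigr => y _.
rewrite /fourier mulr_sumr; apply: eq_bigr => x _.
by rewrite Fglue_eval // opprD addrA [LHS](epowD pp) mulrC.
Qed.

Unset Implicit Arguments.
Unset Strict Implicit.

Theorem theorem1 (p n : nat) (K : finFieldType)
  (hp : prime p) (hn : (1 <= n)%N) (hK : #|K| = (p ^ n)%N)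
  (f : 'F_p -> K -> 'F_p)
  (hnb : forall k : 'F_p, near_bent p n (f k))
  (hdisj : forall i j : 'F_p, i != j ->
     supp_fourier p n (f i) :&: supp_fourier p n (f j) = set0) :
  bent2 p n (Fglue f).
Proof.
pose W y a := fourier p n (f y) a.
have one a y0 : W y0 a != 0 -> forall y, y != y0 -> W y a = 0.
  move=> h0 y hy; apply/eqP; apply: contraT => hy0.
  have := hdisj _ _ hy; move/setP => /(_ a).
  by rewrite !inE hy0 h0 /=.
have nz a y : W y a != 0 -> `|W y a| ^+ 2 = (p ^ n.+1)%:R.
  move=> h; case: (hnb y a) => // /eqP; rewrite expf_eq0 /= normr_eq0.
  by rewrite (negPf h).
pose q := (p ^ n.+1)%N.
pose c a := if [exists y, W y a != 0] then q else 0%N.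
have Tc a : \sum_(y : 'F_p) `|W y a| ^+ 2 = (c a)%:R.
  rewrite /c; case: existsP => [[y0 h0] | hno].
    rewrite (bigD1 y0) //= nz // big1 ?addr0 // => y hy.
    by rewrite (one _ y0) // normr0 expr0n.
  rewrite big1 // => y _; have : ~~ (W y a != 0) by apply/negP => h; apply: hno; exists y.
  by move/negPn/eqP ->; rewrite normr0 expr0n.
have sumc : (\sum_(a : K) c a)%N = (p * (#|K| * #|K|))%N.
  apply/eqP; rewrite -(eqr_nat algC) natr_sum.
  under eq_bigr => a _ do rewrite -Tc.
  rewrite exchange_big /=.
  under eq_bigr => y _ do rewrite (parseval hp hn hK).
  by rewrite sumr_const card_Fp // [X in _ == X]natrM mulr_natl.
have allnz a : exists y, W y a != 0.
  case: (pickP (fun y => W y a != 0)) => [y hy | hno]; first by exists y.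
  exfalso.
  have ca : c a = 0%N.
    rewrite /c; case: existsP => // -[y hy]; by rewrite hno in hy.
  have le : (\sum_(x : K) c x + q <= \sum_(x : K) q)%N.
    rewrite (bigD1 a) //= [X in (_ <= X)%N](bigD1 a) //= ca add0n addnC leq_add2l.
    by apply: leq_sum => x _; rewrite /c; case: ifP.
  move: le; rewrite sumc sum_nat_const.
  change ((p * (#|K| * #|K|) + q <= #|K| * q)%N -> False).
  have e : (#|K| * q = p * (#|K| * #|K|))%N by rewrite /q hK expnS mulnCA.
  rewrite e -[X in (_ <= X)%N]addn0 leq_add2l leqn0 /q expn_eq0.
  by rewrite (negPf (negbT (gtn_eqF (prime_gt0 hp)))).
move=> a b; rewrite (fourier2_split _ hp).
have [y0 h0] := allnz a.
rewrite (bigD1 y0) //= big1 ?addr0.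
  by rewrite normrM exprMn norm_epow // expr1n mul1r nz.
by move=> y hy; rewrite -/(W y a) (one _ y0) // mulr0.
Qed.
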